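(* For all integers $n,k$ with $0\leqslant k\leqslant n-1$, \begin{align*} \sum_{m=k}^{n-1}(-1)^{n+m}\frac{2m+1}{(n-m)(n+m+1)} &= -\psi(2n+1)+\psi(n+k+1)+\psi(n+1)-\psi(n-k+1)\\ &\quad -\psi\left(\left\lfloor\frac{n+k}{2}\right\rfloor+1\right) +\psi\left(\left\lfloor\frac{n-k}{2}\right\rfloor+1\right). \end{align*}
   Context: $\psi=\Gamma'/\Gamma$ is the digamma function; $\lfloor x\rfloor$ denotes the greatest integer not exceeding $x$. *)

(* Defs.v *)
From Stdlib Require Import Reals.
From Coquelicot Require Import Coquelicot.
Open Scope R_scope.

Definition euler_gamma : R :=
  real (Lim_seq (fun N : nat =>
          sum_n_m (fun j : nat => / INR j) 1 (S N) - ln (INR (S N)))).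

(* Digamma function psi = Gamma'/Gamma, via its standard series
   representation  psi(x) = -gamma + sum_{j>=0} (1/(j+1) - 1/(j+x)),
   valid for x not a non-positive integer (we only use x >= 1). *)
Definition digamma (x : R) : R :=
  - euler_gamma + Series (fun j : nat => / INR (S j) - / (INR j + x)).

(* Main.v *)
Require Import Defs.
From Stdlib Require Import Reals Lra Lia.
From Coquelicot Require Import Coquelicot.
Open Scope R_scope.

Fixpoint H (a : nat) : R := match a with 0%nat => 0 | S p => H p + / INR (S p) end.

Lemma tele_sum (c : R) (hc : 0 < c) (N : nat) :
  sum_n (fun j => / (INR j + c) - / (INR j + c + 1)) N = / c - / (INR N + c + 1).
Proof.
  induction N.
  - rewrite sum_O. simpl. rewrite Rplus_0_l. reflexivity.
  - rewrite sum_Sn, IHN. unfold plus. cbv beta. rewrite S_INR. simpl. replace (INR N + 1 + c) with (INR N + c + 1) by ring. ring.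
Qed.

Lemma tele (c : R) (hc : 0 < c) :
  is_series (fun j => / (INR j + c) - / (INR j + c + 1)) (/ c).
Proof.
  assert (L : is_lim_seq (fun N => / c - / (INR N + c + 1)) (/ c)).
  { assert (L0 : is_lim_seq (fun N => / (INR N + c + 1)) (Rbar_inv p_infty)).
    { apply is_lim_seq_inv. 2: discriminate.
      eapply is_lim_seq_le_p_loc. 2: apply is_lim_seq_INR.
      exists 0%nat. intros. lra. }
    simpl in L0.
    replace (/ c) with (/ c - 0) at 2 by ring.
    apply (is_lim_seq_minus _ _ (/ c) 0). apply is_lim_seq_const. exact L0.
    simpl. unfold is_Rbar_minus, is_Rbar_plus. simpl. f_equal. f_equal. ring. }
  eapply is_lim_seq_ext in L.
  2:{ intros N. symmetry. apply tele_sum. exact hc. }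
  exact L.
Qed.

Lemma term_series (a : nat) :
  is_series (fun j : nat => / INR (S j) - / (INR j + (INR a + 1))) (H a).
Proof.
  induction a.
  - change (H 0) with 0. replace 0 with (/1 * 0) by ring. eapply is_series_ext.
    2: apply (is_series_scal_r 0 _ _ (tele 1 ltac:(lra))).
    intros j. cbv beta. rewrite Rmult_0_r, S_INR. simpl (INR 0). replace (INR j + (0 + 1)) with (INR j + 1) by ring. symmetry. apply Rminus_diag_eq. reflexivity.
  - replace (H (S a)) with (plus (H a) (/ (INR a + 1))).
    2:{ cbn [H]. rewrite S_INR. reflexivity. }
    eapply is_series_ext.
    2:{ apply (is_series_plus _ _ _ _ IHa (tele (INR a + 1) ltac:(pose proof (pos_INR a); lra))). }
    intros j. cbv beta. rewrite !S_INR. unfold plus. simpl.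
    replace (INR j + (INR a + 1 + 1)) with (INR j + (INR a + 1) + 1) by ring. ring.
Qed.

Lemma digamma_nat (a : nat) : digamma (INR a + 1) = - euler_gamma + H a.
Proof.
  unfold digamma. rewrite (is_series_unique _ _ (term_series a)). reflexivity.
Qed.

Lemma Hhalf (a : nat) :
  H (S a / 2) - H (a / 2) = (1 - (-1) ^ a) / INR (S a).
Proof.
  destruct (Nat.Even_or_Odd a) as [[q ->]|[q ->]].
  - replace (S (2 * q) / 2)%nat with q by (apply Nat.div_unique with 1%nat; lia).
    replace (2 * q / 2)%nat with q by (apply Nat.div_unique with 0%nat; lia).
    rewrite pow_1_even. rewrite S_INR. pose proof (pos_INR (2*q)). field. lra.
  - replace (S (2 * q + 1) / 2)%nat with (S q) by (apply Nat.div_unique with 0%nat; lia).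
    replace ((2 * q + 1) / 2)%nat with q by (apply Nat.div_unique with 1%nat; lia).
    cbn [H]. rewrite Nat.add_1_r, pow_1_odd.
    replace (INR (S (S (2 * q)))) with (2 * INR (S q)) by (rewrite !S_INR, mult_INR; simpl; ring).
    pose proof (pos_INR q). rewrite S_INR. field. lra.
Qed.

Definition fterm (n m : nat) : R :=
  (-1) ^ (n + m) * (2 * INR m + 1) / ((INR n - INR m) * (INR n + INR m + 1)).

Definition Fh (n k : nat) : R :=
  - H (2 * n) + H (n + k) + H n - H (n - k) - H ((n + k) / 2) + H ((n - k) / 2).

Lemma step (n k : nat) (hk : (k < n)%nat) :
  fterm n k + Fh n (S k) = Fh n k.
Proof.
  unfold Fh, fterm.
  set (a := (n + k)%nat). set (b := (n - S k)%nat).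
  replace (n + S k)%nat with (S a) by (unfold a; lia).
  replace (n - k)%nat with (S b) by (unfold b; lia).
  pose proof (Hhalf a) as Ha. pose proof (Hhalf b) as Hb.
  cbn [H].
  assert (Ea : INR (S a) = INR n + INR k + 1) by (unfold a; rewrite S_INR, plus_INR; ring).
  assert (Eb : INR (S b) = INR n - INR k) by (unfold b; rewrite <- minus_INR by lia; f_equal; lia).
  assert (Es : (-1) ^ b = - (-1) ^ a).
  { assert (E2 : (S (a + b) = 2 * n)%nat) by (unfold a, b; lia).
    assert (P : (-1) ^ a * (-1) ^ b = -1).
    { rewrite <- pow_add. replace (a + b)%nat with (S (2 * (n - 1))) by lia.
      rewrite pow_1_odd. reflexivity. }
    assert (Q : (-1) ^ a * (-1) ^ a = 1).
    { rewrite <- pow_add. replace (a + a)%nat with (2 * a)%nat by lia. apply pow_1_even. }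
    nra. }
  fold a.
  assert (HnS : INR n - INR k <> 0) by (rewrite <- Eb; apply not_0_INR; lia).
  assert (HnA : INR n + INR k + 1 <> 0) by (rewrite <- Ea; apply not_0_INR; lia).
  rewrite Ea, Eb in *. rewrite Es in Hb.
  replace (H (S a / 2)) with (H (a / 2) + (1 - (-1) ^ a) / (INR n + INR k + 1)) by lra.
  replace (H (S b / 2)) with (H (b / 2) + (1 - - (-1) ^ a) / (INR n - INR k)) by lra.
  field. split; assumption.
Qed.

Lemma harm_id (n : nat) (hn : (1 <= n)%nat) :
  forall d k, (n - k = d)%nat -> (k <= n)%nat -> sum_n_m (fterm n) k (n - 1) = Fh n k.
Proof.
  induction d; intros k hd hk.
  - assert (k = n) by lia. subst k.
    rewrite sum_n_m_zero by lia.
    assert (E : Fh n n = 0).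
    { unfold Fh. replace (n + n)%nat with (2 * n)%nat by lia. rewrite Nat.sub_diag.
      replace (2 * n / 2)%nat with n by (apply Nat.div_unique with 0%nat; lia).
      simpl (0 / 2)%nat. cbn [H]. ring. }
    rewrite E. reflexivity.
  - rewrite sum_Sn_m by lia. rewrite (IHd (S k)) by lia.
    unfold plus; simpl. apply step. lia.
Qed.

Theorem mainTheorem4 (n k : nat) (hk : (k <= n - 1)%nat) (hn : (1 <= n)%nat) :
  sum_n_m (fun m : nat =>
      (-1) ^ (n + m) * (2 * INR m + 1) / ((INR n - INR m) * (INR n + INR m + 1)))
    k (n - 1)
  = - digamma (2 * INR n + 1) + digamma (INR n + INR k + 1) + digamma (INR n + 1)
    - digamma (INR n - INR k + 1)
    - digamma (INR ((n + k) / 2) + 1) + digamma (INR ((n - k) / 2) + 1).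
Proof.
  enough (E : Fh n k = - digamma (2 * INR n + 1) + digamma (INR n + INR k + 1) + digamma (INR n + 1)
    - digamma (INR n - INR k + 1)
    - digamma (INR ((n + k) / 2) + 1) + digamma (INR ((n - k) / 2) + 1)).
  { rewrite <- E. apply (harm_id n hn (n - k) k); lia. }
  replace (2 * INR n) with (INR (2 * n)) by (rewrite mult_INR; reflexivity).
  replace (INR n + INR k) with (INR (n + k)) by (apply plus_INR).
  replace (INR n - INR k) with (INR (n - k)) by (apply minus_INR; lia).
  rewrite !digamma_nat. unfold Fh. ring.
Qed.
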